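(* Let $K$ be the complete graph on $X \cup Y$, where $X$ and $Y$ are disjoint sets of size $n$. Let $F$ be a subgraph of $K$ containing no triangle that meets both $X$ and $Y$. Then $|F|\leq n^2$.
   Context: $|F|$ denotes the number of edges of $F$. *)

(* Defs.v *)
From mathcomp Require Import all_boot.
Set Implicit Arguments. Unset Strict Implicit. Unset Printing Implicit Defensive.

(* Vertex set X ∪ Y of K, with X = copy 'inl' of 'I_n and Y = copy 'inr' of
   'I_n; these are disjoint sets of size n. *)
Definition vtx (n : nat) : finType := ('I_n + 'I_n)%type.

Definition inX n (v : vtx n) : bool := if v is inl _ then true else false.
Definition inY n (v : vtx n) : bool := if v is inr _ then true else false.

Definition subgraph_of_K n (F : {set {set vtx n}}) : Prop :=
  forall e, e \in F -> #|e| = 2.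

Definition triangle n (F : {set {set vtx n}}) (a b c : vtx n) : Prop :=
  [/\ a != b, b != c, a != c &
      [/\ [set a; b] \in F, [set b; c] \in F & [set a; c] \in F]].

Definition meets_X_and_Y n (a b c : vtx n) : Prop :=
  [|| inX a, inX b | inX c] /\ [|| inY a, inY b | inY c].

(* Main.v *)
Require Import Defs.
From mathcomp Require Import all_boot.
From mathcomp Require Import zify.
Set Implicit Arguments. Unset Strict Implicit.

Definition EE n (F : {set {set vtx n}}) (S : {set vtx n}) := [set e in F | e \subset S].
Definition SX n (S : {set vtx n}) := [set v in S | inX v].
Definition SY n (S : {set vtx n}) := [set v in S | inY v].

Lemma cardU_le (T : finType) (A B : {set T}) : #|A :|: B| <= #|A| + #|B|.
Proof. by rewrite cardsU leq_subr. Qed.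

Lemma step n (F : {set {set vtx n}}) (S : {set vtx n}) x y : subgraph_of_K F ->
  x \in S -> y \in S -> inX x -> inY y ->
  (forall z, z \in S -> z != x -> z != y -> [set x; z] \in F -> [set y; z] \in F -> False) ->
  #|EE F S| <= #|EE F (S :\ x :\ y)| + #|S :\ x :\ y| + 1.
Proof.
move=> HF xS yS xX yY H.
set S' := S :\ x :\ y.
pose g z := if [set x; z] \in F then [set x; z] else [set y; z].
have xy : x != y by apply/eqP => e; rewrite e in xX; move: xX yY; case: (y).
have inS' : forall b, b \in S -> b != x -> b != y -> b \in S'.
  by move=> b bS bx b_y; rewrite !in_setD1 bS bx b_y.
have H1 : forall a b, a != b -> [set a; b] \in F -> a \in S -> b \in S ->
    (a == x) || (a == y) -> [set a; b] \in EE F S' :|: (g @: S' :|: [set [set x; y]]).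
  move=> a b ab abF aS bS /orP [/eqP ax | /eqP ay].
  - subst a. case: (eqVneq b y) => [->|bny]; first by rewrite !inE eqxx !orbT.
    apply/setUP; right; apply/setUP; left; apply/imsetP; exists b.
      by apply: inS' => //; rewrite eq_sym.
    by rewrite /g abF.
  - subst a. case: (eqVneq b x) => [->|bnx]; first by rewrite setUC !inE eqxx !orbT.
    apply/setUP; right; apply/setUP; left; apply/imsetP; exists b.
      by apply: inS' => //; rewrite eq_sym.
    rewrite /g; case: ifP => // hx; exfalso; apply: (H b) => //; rewrite eq_sym //.
have sub : EE F S \subset EE F S' :|: (g @: S' :|: [set [set x; y]]).
  apply/subsetP=> e; rewrite inE => /andP [eF eS].
  have /eqP/cards2P [a [b [ab ee]]] := HF e eF.
  subst e.
  have aS : a \in S by apply: (subsetP eS); rewrite !inE eqxx.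
  have bS : b \in S by apply: (subsetP eS); rewrite !inE eqxx orbT.
  case ha: ((a == x) || (a == y)); first exact: H1.
  case hb: ((b == x) || (b == y)).
    rewrite setUC; apply: H1 => //; [by rewrite eq_sym | by rewrite setUC].
  have /andP [ax ay] : (a != x) && (a != y) by rewrite -negb_or ha.
  have /andP [bx b_y] : (b != x) && (b != y) by rewrite -negb_or hb.
  apply/setUP; left; rewrite inE eF /=; apply/subsetP => v.
  by rewrite !inE => /orP [] /eqP ->; apply/and3P.
apply: leq_trans (subset_leq_card sub) _.
rewrite -addnA; apply: leq_trans (cardU_le _ _) _; rewrite leq_add2l.
apply: leq_trans (cardU_le _ _) _; rewrite cards1 leq_add2r.
exact: leq_imset_card.
Qed.

Lemma cardXY n (S : {set vtx n}) : #|S| = #|SX S| + #|SY S|.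
Proof.
rewrite -(cardsID [set v | inX v] S); congr (_ + _); apply: eq_card => v;
  rewrite !inE; case: v => ? /=; rewrite ?andbT ?andbF //.
Qed.

Lemma ind n (F : {set {set vtx n}}) : subgraph_of_K F ->
  (forall a b c : vtx n, triangle F a b c -> ~ meets_X_and_Y a b c) ->
  forall k (S : {set vtx n}), #|SX S| = k -> #|SY S| = k -> #|EE F S| <= k ^ 2.
Proof.
move=> HF Htri; elim=> [|k IH] S hX hY.
  have S0 : S = set0.
    apply/setP => v; rewrite inE; apply/negbTE/negP => vS.
    move: (cards0_eq hX) (cards0_eq hY) => /setP eX /setP eY.
    move: (eX v) (eY v); rewrite !inE vS; by case: v {vS}.
  rewrite leqn0 cards_eq0; apply/eqP/setP => e; rewrite !inE S0 subset0.
  apply/negbTE/negP => /andP [eF /eqP e0].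
  by have := HF e eF; rewrite e0 cards0.
have [x [y [xS yS xX yY H]]] : exists x y, [/\ x \in S, y \in S, inX x, inY y &
  (forall z, z \in S -> z != x -> z != y -> [set x; z] \in F -> [set y; z] \in F -> False)].
  case: (pickP (fun p : vtx n * vtx n =>
      [&& p.1 \in S, p.2 \in S, inX p.1, inY p.2 & [set p.1; p.2] \in F]))
    => [[x y] /= /and5P [xS yS xX yY xyF] | none].
    exists x, y; split => // z zS zx zy hxz hyz.
    apply: (Htri x y z); last by split; rewrite ?xX ?yY ?orbT.
    split; rewrite 1?eq_sym //.
    by apply/eqP => e; rewrite -e in xX; move: xX yY; case: (y).
  have /set0Pn [x] : SX S != set0 by rewrite -card_gt0 hX.
  have /set0Pn [y] : SY S != set0 by rewrite -card_gt0 hY.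
  rewrite !inE => /andP [yS yY] /andP [xS xX].
  exists x, y; split => // z zS zx zy hxz hyz.
  case hz: (inX z).
    have := none (z, y); rewrite /= zS yS hz yY setUC hyz //.
  have := none (x, z); rewrite /= zS xS xX hxz /= andbT.
  by move: hz; case: (z).
have := step HF xS yS xX yY H.
set S' := S :\ x :\ y.
have hX' : #|SX S'| = k.
  have -> : SX S' = SX S :\ x.
    apply/setP => v; rewrite !inE; case: (eqVneq v y) => [->|]; last first.
      by move=> _ /=; rewrite andbA.
    by move: yY; case: (y) => //= i _; rewrite !andbF.
  move: hX; rewrite (cardsD1 x) !inE xS xX /=; lia.
have hY' : #|SY S'| = k.
  have -> : SY S' = SY S :\ y.
    apply/setP => v; rewrite !inE; case: (eqVneq v x) => [->|]; last first.
      by move=> _ /=; rewrite andbA.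
    by move: xX; case: (x) => //= i _; rewrite !andbF.
  move: hY; rewrite (cardsD1 y) !inE yS yY /=; lia.
have := IH S' hX' hY'.
rewrite (cardXY S') hX' hY'.
lia.
Qed.

Theorem mainTheorem3 (n : nat) (F : {set {set vtx n}}) :
  subgraph_of_K F ->
  (forall a b c : vtx n, triangle F a b c -> ~ meets_X_and_Y a b c) ->
  #|F| <= n ^ 2.
Proof.
move=> HF Htri.
have -> : F = EE F setT by apply/setP => e; rewrite !inE subsetT andbT.
apply: (ind HF Htri).
  have -> : SX [set: vtx n] = [set inl i | i in [set: 'I_n]].
    apply/setP => v; rewrite !inE; case: v => i /=; last first.
      by apply/esym/negbTE/imsetP => [[j _]].
    by apply/esym/imsetP; exists i; rewrite ?inE.
  by rewrite card_imset ?cardsT ?card_ord // => i j [].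
have -> : SY [set: vtx n] = [set inr i | i in [set: 'I_n]].
  apply/setP => v; rewrite !inE; case: v => i /=.
    by apply/esym/negbTE/imsetP => [[j _]].
  by apply/esym/imsetP; exists i; rewrite ?inE.
by rewrite card_imset ?cardsT ?card_ord // => i j [].
Qed.
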